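(* There exists a connected graphon $W$ with $h_W=0$. Moreover $W$ can be chosen $\{0,1\}$-valued such that $W^{-1}(1)$ contains an open subset of $(0,1)^2$ containing the diagonal $\{(x,x):0<x<1\}$.
   Context: Let $I=[0,1]$ with Lebesgue measure $\mu_L$. A graphon is a measurable function $W:I^2\to I$ with $W(x,y)=W(y,x)$. For measurable $A,B\subseteq I$ put $e_W(A,B)=\int_{A\times B}W$ and $\mathrm{vol}_W(A)=e_W(A,I)$. $W$ is connected if $e_W(A,A^c)\neq0$ for every measurable $A$ with $0<\mu_L(A)<1$. The Cheeger constant is $h_W=\inf_{A:\,0<\mu_L(A)<1}\frac{e_W(A,A^c)}{\min\{\mathrm{vol}_W(A),\mathrm{vol}_W(A^c)\}}$. *)

(* Defs.v *)
From HB Require Import structures.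
From mathcomp Require Import all_boot all_order all_algebra.
From mathcomp Require Import all_classical all_reals all_analysis.
Set Implicit Arguments. Unset Strict Implicit. Unset Printing Implicit Defensive.
Import Order.TTheory GRing.Theory Num.Theory.
Import numFieldNormedType.Exports.
Local Open Scope classical_set_scope.
Local Open Scope ring_scope.

Section Graphon.
Variable R : realType.

Definition I01 : set R := `[0%R, 1%R].

Definition leb := (@lebesgue_measure R).
Definition leb2 := (leb \x leb)%E.

(* a graphon: measurable W : I^2 -> I, symmetric (values outside I^2 are irrelevant) *)
Definition graphon (W : R * R -> R) : Prop :=
  measurable_fun (I01 `*` I01) W /\
  (forall x y, I01 x -> I01 y -> 0 <= W (x, y) <= 1) /\
  (forall x y, I01 x -> I01 y -> W (x, y) = W (y, x)).

Definition eW (W : R * R -> R) (A B : set R) : \bar R :=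
  (\int[leb2]_(z in A `*` B) (W z)%:E)%E.

Definition volW (W : R * R -> R) (A : set R) : \bar R := eW W A I01.

Definition proper_subset (A : set R) : Prop :=
  measurable A /\ A `<=` I01 /\ (0 < leb A)%E /\ (leb A < 1)%E.

Definition connected_graphon (W : R * R -> R) : Prop :=
  forall A, proper_subset A -> eW W A (I01 `\` A) != 0%E.

Definition cheeger (W : R * R -> R) : \bar R :=
  ereal_inf [set r | exists A, proper_subset A /\
     r = (eW W A (I01 `\` A) / Order.min (volW W A) (volW W (I01 `\` A)))%E].

End Graphon.

(* Main.v *)
Require Import Defs.
From HB Require Import structures.
From mathcomp Require Import all_boot all_order all_algebra.
From mathcomp Require Import all_classical all_reals all_analysis.
From mathcomp Require Import ring lra.
Import Order.TTheory GRing.Theory Num.Theory.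
Import numFieldNormedType.Exports.
Local Open Scope classical_set_scope.
Local Open Scope ring_scope.

Section Arith.
Variable R : realType.
Definition cc (n : nat) : R := (2^-1) ^+ n.
Definition ee (n : nat) : R := (cc n) ^+ 3 / 8.

Lemma cc0 : cc 0 = 1. Proof. by rewrite /cc expr0. Qed.
Lemma ccS n : cc n.+1 = cc n / 2. Proof. by rewrite /cc exprSr. Qed.
Lemma cc_gt0 n : 0 < cc n. Proof. by rewrite /cc exprn_gt0 // invr_gt0. Qed.
Lemma cc_le1 n : cc n <= 1.
Proof. by rewrite /cc exprn_ile1 // ?invr_ge0 // invf_le1 // ler1n. Qed.
Lemma cc_anti m n : (m <= n)%N -> cc n <= cc m.
Proof.
move=> /subnK <-; elim: (n - m)%N => [|k IH]; first by rewrite add0n.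
rewrite addSn ccS; have := cc_gt0 (k + m); lra.
Qed.
Lemma ee_gt0 n : 0 < ee n.
Proof. by rewrite /ee divr_gt0 // exprn_gt0 // cc_gt0. Qed.
Lemma ee_le n : ee n <= cc n / 8.
Proof.
rewrite /ee ler_pM2r // !exprS expr0 mulr1.
have := cc_le1 n; have := cc_gt0 n; nra.
Qed.
Lemma cc_lt_inv n : cc n <= (n.+1%:R)^-1.
Proof.
rewrite /cc exprVn lef_pV2 ?posrE ?exprn_gt0 // -natrX ler_nat.
by apply: ltn_expl.
Qed.
End Arith.


Section Sets.
Variable R : realType.
Definition JJ (n : nat) : set R := `](cc R n.+1 - ee R n.+1), (cc R n + ee R n)[.
Definition SS : set (R * R) := \bigcup_n (JJ n `*` JJ n).
Definition UU : set (R * R) := SS `&` (`]0%R, 1%R[ `*` `]0%R, 1%R[).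

Lemma openX (A B : set R) : open A -> open B -> open (A `*` B).
Proof.
move=> oA oB.
have cf : continuous (@fst R R) by move=> z; exact: cvg_fst.
have cs : continuous (@snd R R) by move=> z; exact: cvg_snd.
have -> : A `*` B = (fst @^-1` A) `&` (snd @^-1` B) by [].
apply: openI; first exact: (proj1 (continuousP _) cf).
exact: (proj1 (continuousP _) cs).
Qed.

Lemma open_UU : open UU.
Proof.
apply: openI; last by apply: openX; exact: itv_open.
by apply: bigcup_open => n _; apply: openX; exact: itv_open.
Qed.

Lemma measurable_SS : measurable SS.
Proof.
apply: bigcupT_measurable => n; apply: measurableX; exact: measurable_itv.
Qed.

Lemma cover x : 0 < x <= 1 -> exists n, cc R n.+1 <= x <= cc R n.
Proof.
move=> /andP[x0 x1].
have [N hN] : exists N, cc R N < x.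
  exists (Num.bound (x^-1)); apply: (le_lt_trans (cc_lt_inv _ _)).
  rewrite -[ltRHS]invrK ltf_pV2 ?posrE ?invr_gt0 //.
  apply: (lt_le_trans (archi_boundP _)); first by rewrite invr_ge0 ltW.
  by rewrite ler_nat.
elim: N hN => [|N IH] hN; first by rewrite cc0 in hN; lra.
have [xN|xN] := leP x (cc R N); first by exists N; rewrite xN ltW.
exact: IH.
Qed.

Lemma JJ_in n x : cc R n.+1 <= x <= cc R n -> JJ n x.
Proof.
move=> /andP[h1 h2]; rewrite /JJ /= in_itv /=.
have := ee_gt0 R n; have := ee_gt0 R n.+1; move=> ? ?; apply/andP; split; lra.
Qed.

Lemma UU_diag x : 0 < x < 1 -> UU (x, x).
Proof.
move=> /andP[x0 x1]; have [n hn] : exists n, cc R n.+1 <= x <= cc R n.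
  by apply: cover; rewrite x0 ltW.
split; first by exists n => //; split; exact: JJ_in.
by split => /=; rewrite in_itv /= x0 x1.
Qed.
End Sets.


Section Meas.
Variable R : realType.
Definition WW (z : R * R) : R := \1_(SS R) z.

Lemma eW_E (A B : set R) : measurable A -> measurable B ->
  eW WW A B = leb2 (SS R `&` (A `*` B)).
Proof.
move=> mA mB; rewrite /eW /WW; apply: integral_indic.
  exact: measurableX.
exact: measurable_SS.
Qed.

Lemma leb2X (A B : set R) : measurable A -> measurable B ->
  leb2 (A `*` B) = (leb A * leb B)%E.
Proof. by move=> mA mB; rewrite /leb2 product_measure1E. Qed.

Lemma null_cover (B : set R) (F : nat -> set R) : measurable B ->
  (forall n, measurable (F n)) -> (forall n, leb (F n) = 0%E) ->
  B `<=` [set 0] `|` \bigcup_n F n -> leb B = 0%E.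
Proof.
move=> mB mF F0 BF.
pose G n := if n is k.+1 then F k else [set (0:R)].
have mG : forall n, measurable (G n) by case => [|k] //=.
have G0 : forall n, leb (G n) = 0%E by case => [|k] /=; [exact: lebesgue_measure_set1|].
apply/eqP; rewrite -measure_le0.
have := @measure_sigma_subadditive _ _ _ (@lebesgue_measure R) B G mG mB.
rewrite /subset_sigma_subadditive eseries0; last by move=> i _ _; exact: G0.
apply => x /BF [->|[n _ Fx]]; first by exists 0%N.
by exists n.+1.
Qed.
End Meas.


Section Conn.
Variable R : realType.

Lemma leb_oo (a b : R) : a < b -> leb `]a, b[ = (b - a)%:E.
Proof. by move=> ab; rewrite /leb lebesgue_measure_itv /= lte_fin ab -EFinD. Qed.

Definition VV n : set R := `](cc R n.+1 - ee R n.+1), (cc R n.+1 + ee R n.+1)[.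

Lemma VV_facts n x : VV n x -> [/\ JJ R n x, JJ R n.+1 x & I01 x].
Proof.
rewrite /VV /JJ /I01 /= !in_itv /= => /andP[h1 h2].
have := ccS R n; have := ccS R n.+1; have := cc_gt0 R n; have := cc_le1 R n.
have := ee_gt0 R n; have := ee_gt0 R n.+1; have := ee_gt0 R n.+2.
have := ee_le R n; have := ee_le R n.+1; have := ee_le R n.+2.
move=> *; split; apply/andP; split; lra.
Qed.

Lemma VV_pos n : (0 < leb (VV n))%E.
Proof.
rewrite /VV leb_oo ?lte_fin; have := ee_gt0 R n.+1; lra.
Qed.

Lemma measurable_JJ n : measurable (JJ R n). Proof. exact: measurable_itv. Qed.
Lemma measurable_I01 : measurable (@I01 R). Proof. exact: measurable_itv. Qed.

Lemma connected_WW : connected_graphon (@WW R).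
Proof.
move=> A [mA [AI [A0 A1]]]; apply/eqP => h.
have mI := measurable_I01.
have mC : measurable (@I01 R `\` A) by exact: measurableD.
rewrite eW_E // in h.
have hP : forall n, leb (A `&` JJ R n) = 0%E \/ leb (JJ R n `&` (@I01 R `\` A)) = 0%E.
  move=> n.
  have mJ := measurable_JJ n.
  have : (leb (A `&` JJ R n) * leb (JJ R n `&` (@I01 R `\` A)) = 0)%E.
    rewrite -leb2X; try exact: measurableI.
    apply/eqP; rewrite -measure_le0 -h; apply: le_measure; rewrite ?inE.
    - by apply: measurableX; exact: measurableI.
    - by apply: measurableI; [exact: measurable_SS | exact: measurableX].
    - move=> [x y] [[Ax Jx] [Jy Cy]]; split; last by split.
      by exists n => //; split.
  by move/eqP; rewrite mule_eq0 => /orP[/eqP|/eqP]; [left|right].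
have cross : forall (B1 B2 : set R) n, measurable B1 -> measurable B2 ->
    VV n `<=` B1 `|` B2 -> leb B1 = 0%E -> leb B2 = 0%E -> False.
  move=> B1 B2 n m1 m2 sub z1 z2.
  have := VV_pos n; rewrite lt_neqAle => /andP[/negP + _]; apply.
  rewrite eq_sym -measure_le0 -z1 -[leb B1]adde0 -z2.
  apply: (le_trans _ (measureU2 (@lebesgue_measure R) m1 m2)).
  by apply: le_measure; rewrite ?inE //; [exact: measurable_itv|exact: measurableU].
have hPQ : forall n, leb (A `&` JJ R n) = 0%E -> leb (JJ R n.+1 `&` (@I01 R `\` A)) = 0%E -> False.
  move=> n z1 z2; apply: (cross _ _ n _ _ _ z1 z2).
  - exact: measurableI (measurable_JJ _).
  - exact: measurableI (measurable_JJ _) mC.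
  move=> x /VV_facts [J1 J2 Ix]; have [Ax|nAx] := pselect (A x).
    by left. by right; split => //; split.
have hQP : forall n, leb (JJ R n `&` (@I01 R `\` A)) = 0%E -> leb (A `&` JJ R n.+1) = 0%E -> False.
  move=> n z1 z2; apply: (cross _ _ n _ _ _ z1 z2).
  - exact: measurableI (measurable_JJ _) mC.
  - exact: measurableI (measurable_JJ _).
  move=> x /VV_facts [J1 J2 Ix]; have [Ax|nAx] := pselect (A x).
    by right. by left; split => //; split.
have covI : forall x, @I01 R x -> x <> 0 -> exists n, JJ R n x.
  move=> x; rewrite /I01 /= in_itv /= => /andP[x0 x1] xn0.
  have [n hn] : exists n, cc R n.+1 <= x <= cc R n.
    apply: cover; rewrite x1 andbT lt_neqAle x0 andbT eq_sym; exact/eqP.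
  by exists n; exact: JJ_in.
case: (hP 0%N) => [P0|Q0].
- have allP : forall n, leb (A `&` JJ R n) = 0%E.
    elim => // n IH; case: (hP n.+1) => // Qn; exfalso; exact: hPQ IH Qn.
  have : leb A = 0%E.
    apply: (@null_cover R A (fun n => A `&` JJ R n) mA _ allP).
      by move=> n; apply: measurableI => //; exact: measurable_JJ.
    move=> x Ax; have [->|xn0] := pselect (x = 0); first by left.
    have [n Jn] := covI x (AI x Ax) xn0; right; by exists n.
  by move=> hA; rewrite hA ltxx in A0.
- have allQ : forall n, leb (JJ R n `&` (@I01 R `\` A)) = 0%E.
    elim => // n IH; case: (hP n.+1) => // Pn; exfalso; exact: hQP IH Pn.
  have hC : leb (@I01 R `\` A) = 0%E.
    apply: (@null_cover R _ (fun n => JJ R n `&` (@I01 R `\` A)) mC _ allQ).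
      by move=> n; apply: measurableI => //; exact: measurable_JJ.
    move=> x [Ix nAx]; have [->|xn0] := pselect (x = 0); first by left.
    have [n Jn] := covI x Ix xn0; right; by exists n.
  have : (leb (@I01 R) <= leb A + leb (@I01 R `\` A))%E.
    apply: (le_trans _ (measureU2 (@lebesgue_measure R) mA mC)).
    apply: le_measure; rewrite ?inE //; first exact: measurableU.
    by move=> x Ix; have [Ax|nAx] := pselect (A x); [left|right].
  rewrite hC adde0 /I01 /leb lebesgue_measure_itv /= lte_fin ltr01 oppr0 adde0.
  by move=> h1; have := lt_le_trans A1 h1; rewrite ltxx.
Qed.
End Conn.


Section Cheeg.
Variable R : realType.

Lemma leb_cc (a b : R) : a <= b -> leb `[a, b] = (b - a)%:E.
Proof.
move=> ab; rewrite /leb lebesgue_measure_itv /= lte_fin.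
rewrite le_eqVlt in ab; case/orP: ab => [/eqP ->|ab]; first by rewrite ltxx subrr.
by rewrite ab -EFinD.
Qed.
Lemma leb_oc (a b : R) : a < b -> leb `]a, b] = (b - a)%:E.
Proof. by move=> ab; rewrite /leb lebesgue_measure_itv /= lte_fin ab -EFinD. Qed.

Lemma cut_sub p (x y : R) : let c := cc R p.+1 in let e := ee R p.+1 in
  SS R (x, y) -> `[0, c]%classic x -> (@I01 R `\` `[0, c]%classic) y ->
  ((@I01 R `*` `]c, c + e[%classic) `|` (`]c - e, c]%classic `*` @I01 R)) (x, y).
Proof.
move=> c e [k _ [/= Jx Jy]] Ax [Iy nAy].
move: Ax Iy nAy Jx Jy; rewrite /JJ /I01 /c /e /= !in_itv /= => /andP[x0 xc] /andP[y0 y1].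
move=> /negP; rewrite negb_and -!ltNge => /orP[|yc]; first by lra.
move=> /andP[Jx1 Jx2] /andP[Jy1 Jy2].
have cp := cc_gt0 R p.+1; have Sp := ccS R p.+1; have Sp0 := ccS R p.
have ek := ee_le R k; have ek1 := ee_le R k.+1; have ep := ee_gt0 R p.+1.
have ckp := cc_gt0 R k.
case: (ltngtP k p) => hk.
- have := cc_anti R _ _ hk; lra.
  case: (ltngtP k p.+1) => hk'.
  + exfalso; move: hk' hk; rewrite ltnS => h1 h2; have := leq_ltn_trans h1 h2; by rewrite ltnn.
  + have := cc_anti R _ _ hk'; lra.
  + subst k; left; split; rewrite /I01 /= ?in_itv /=; apply/andP; split; lra.
- subst k; right; split; rewrite /I01 /= ?in_itv /=; apply/andP; split; lra.
Qed.
End Cheeg.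


Section Cheeg2.
Variable R : realType.
Lemma eqle {x y : \bar R} : x = y -> (x <= y)%E. Proof. by move->. Qed.

Lemma ratio_bound p : let c := cc R p.+1 in let A := `[0, c]%classic in
  proper_subset A /\
  (eW (@WW R) A (@I01 R `\` A) / Order.min (volW (@WW R) A) (volW (@WW R) (@I01 R `\` A))
     <= (4 * c)%:E)%E.
Proof.
move=> c A.
set e := ee R p.+1.
have cp : 0 < c := cc_gt0 R p.+1.
have Sp : cc R p.+2 = c / 2 := ccS R p.+1.
have Sp0 : c = cc R p / 2 := ccS R p.
have c1 := cc_le1 R p.
have ep : 0 < e := ee_gt0 R p.+1.
have el : e <= c / 8 := ee_le R p.+1.
have mA : measurable A by exact: measurable_itv.
have mI := @measurable_I01 R.
have mC : measurable (@I01 R `\` A) by exact: measurableD.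
split.
  split => //; split.
    by move=> x; rewrite /A /I01 /= !in_itv /= => /andP[h1 h2]; apply/andP; split; lra.
  rewrite /A leb_cc; last by lra.
  by split; rewrite lte_fin; lra.
have mSS := @measurable_SS R.
have hcut : (eW (@WW R) A (@I01 R `\` A) <= (e + e)%:E)%E.
  rewrite eW_E //.
  have mX1 : measurable (@I01 R `*` `]c, c + e[%classic).
    by apply: measurableX => //; exact: measurable_itv.
  have mX2 : measurable (`]c - e, c]%classic `*` @I01 R).
    by apply: measurableX => //; exact: measurable_itv.
  apply: (le_trans _ (le_trans (measureU2 (leb2 (R:=R)) mX1 mX2) _)).
    apply: le_measure; rewrite ?inE.
    - by apply: measurableI => //; exact: measurableX.
    - exact: measurableU.
    - by move=> [x y] [hS [hx hy]]; apply: cut_sub.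
  apply: (le_trans (leeD (eqle (@leb2X R (@I01 R) `]c, c + e[%classic mI (measurable_itv _)))
     (eqle (@leb2X R `]c - e, c]%classic (@I01 R) (measurable_itv _) mI)))).
  rewrite leb_oo; last by lra.
  rewrite leb_oc; last by lra.
  rewrite /I01 leb_cc; last by lra.
  rewrite -!EFinM lee_fin; lra.
have hvA : (((c/4) * (c/4))%:E <= volW (@WW R) A)%E.
  rewrite /volW eW_E //.
  pose K : set R := `](cc R p.+3), (cc R p.+2)[%classic.
  have mK : measurable K by exact: measurable_itv.
  have S2 : cc R p.+3 = cc R p.+2 / 2 := ccS R p.+2.
  have hK : (leb K * leb K)%E = ((c/4)*(c/4))%:E.
    rewrite /K leb_oo; last by lra.
    by rewrite -EFinM S2 Sp; congr (_%:E); field.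
  rewrite -hK; apply: (le_trans (eqle (esym (@leb2X R K K mK mK)))).
  apply: le_measure; rewrite ?inE.
  - exact: measurableX.
  - by apply: measurableI => //; exact: measurableX.
  move=> [x y] [Kx Ky]; move: Kx Ky; rewrite /K /= !in_itv /= => /andP[x1 x2] /andP[y1 y2].
  have := ee_gt0 R p.+2; have := ee_gt0 R p.+3; have := cc_gt0 R p.+3 => *.
  split; first by exists p.+2 => //; split; rewrite /JJ /= in_itv /=; apply/andP; split; lra.
  by split; rewrite /A /I01 /= in_itv /=; apply/andP; split; lra.
have hvC : (((c/4) * (c/4))%:E <= volW (@WW R) (@I01 R `\` A))%E.
  rewrite /volW eW_E //.
  pose K : set R := `](cc R 1), (cc R 0)[%classic.
  have mK : measurable K by exact: measurable_itv.
  have S0 : cc R 1 = cc R 0 / 2 := ccS R 0.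
  have C0 : cc R 0 = 1 := cc0 R.
  have c1' : c <= cc R 1 := cc_anti R 1 p.+1 isT.
  have hK : (leb K * leb K)%E = ((1/2)*(1/2))%:E.
    rewrite /K leb_oo; last by lra.
    by rewrite -EFinM S0 C0; congr (_%:E); field.
  apply: (@le_trans _ _ ((1/2)*(1/2))%:E).
    by rewrite lee_fin; nra.
  rewrite -hK; apply: (le_trans (eqle (esym (@leb2X R K K mK mK)))).
  apply: le_measure; rewrite ?inE.
  - exact: measurableX.
  - by apply: measurableI => //; exact: measurableX.
  move=> [x y] [Kx Ky]; move: Kx Ky; rewrite /K /= !in_itv /= => /andP[x1 x2] /andP[y1 y2].
  have := ee_gt0 R 0; have := ee_gt0 R 1 => *.
  split; first by exists 0%N => //; split; rewrite /JJ /= in_itv /=; apply/andP; split; lra.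
  split; last by rewrite /I01 /= in_itv /=; apply/andP; split; lra.
  split; first by rewrite /I01 /= in_itv /=; apply/andP; split; lra.
  by rewrite /A /= in_itv /= => /andP[_ h]; lra.
have hmin : (((c/4) * (c/4))%:E <= Order.min (volW (@WW R) A) (volW (@WW R) (@I01 R `\` A)))%E.
  by rewrite le_min hvA hvC.
have cut0 : (0 <= eW (@WW R) A (@I01 R `\` A))%E.
  by apply: integral_ge0 => z _; rewrite lee_fin /WW indicE.
have q0 : (0 < (c/4) * (c/4)) by nra.
apply: (@le_trans _ _ ((e + e)%:E * (((c/4) * (c/4))%:E)^-1)%E).
  apply: lee_pmul => //.
    by rewrite inve_ge0; apply: le_trans hmin; rewrite lee_fin ltW.
  rewrite lee_pV2 // ?inE //; last by rewrite lee_fin ltW.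
  by apply: le_trans hmin; rewrite lee_fin ltW.
rewrite inver gt_eqF // -EFinM lee_fin.
have -> : e = c ^+ 3 / 8 by [].
have cn : c != 0 by rewrite gt_eqF.
rewrite le_eqVlt; apply/orP; left; apply/eqP; field; exact: cn.
Qed.
End Cheeg2.


Section Fin.
Variable R : realType.

Lemma cheeger_WW : cheeger (@WW R) = 0%E.
Proof.
apply/eqP; rewrite eq_le; apply/andP; split.
- apply/lee_addgt0Pr => eps eps0; rewrite add0e.
  pose N := Num.bound (4 / eps).
  have [pA hr] := ratio_bound R N.
  set A := `[0, cc R N.+1]%classic in pA hr.
  have hS : [set r | exists A, proper_subset A /\
     r = (eW (@WW R) A (@I01 R `\` A) / Order.min (volW (@WW R) A) (volW (@WW R) (@I01 R `\` A)))%E]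
     (eW (@WW R) A (@I01 R `\` A) / Order.min (volW (@WW R) A) (volW (@WW R) (@I01 R `\` A)))%E.
    by exists A.
  apply: (le_trans (ereal_inf_lbound hS)); apply: (le_trans hr).
  rewrite lee_fin.
  have h1 : 4 / eps < N.+1%:R.
    apply: (lt_le_trans (archi_boundP _)); first by rewrite divr_ge0 // ltW.
    by rewrite ler_nat.
  move: h1; rewrite ltr_pdivrMr // => h1.
  have h2 : cc R N.+1 * N.+1%:R <= 1.
    have hb := cc_lt_inv R N; have ha := cc_anti R N N.+1 (leqnSn N).
    have hn : (N.+1%:R)^-1 * N.+1%:R = 1 :> R by rewrite mulVf // pnatr_eq0.
    have hp : 0 < N.+1%:R :> R by rewrite ltr0Sn.
    rewrite -[leRHS]hn. exact: (ler_wpM2r (ltW hp) (le_trans ha hb)).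
  have := cc_gt0 R N.+1; nra.
- apply: le_ereal_inf_tmp => r [A [pA ->]].
  apply: mule_ge0; first by apply: integral_ge0 => z _; rewrite lee_fin /WW indicE.
  rewrite inve_ge0 le_min; apply/andP; split;
    by apply: integral_ge0 => z _; rewrite lee_fin /WW indicE.
Qed.
End Fin.

Theorem mainTheorem18 (R : realType) :
  exists W : R * R -> R,
    graphon W /\ connected_graphon W /\ cheeger W = 0%E /\
    (forall x y, I01 x -> I01 y -> W (x, y) = 0 \/ W (x, y) = 1) /\
    (exists U : set (R * R),
        open U /\ U `<=` (`]0%R, 1%R[ `*` `]0%R, 1%R[) /\
        (forall x : R, 0 < x < 1 -> U (x, x)) /\
        (forall z, U z -> W z = 1)).
Proof.
exists (@WW R); split; last split; last split; last split.
- split; first by apply: measurable_realfun.measurable_indic; exact: measurable_SS.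
  split.
    move=> x y _ _; rewrite /WW indicE.
    by case: (_ \in _) => /=; rewrite ?lexx ?ler01.
  move=> x y _ _; rewrite /WW !indicE.
  have -> : ((x, y) \in SS R) = ((y, x) \in SS R).
    by apply/idP/idP; rewrite !in_setE => -[k _ [h1 h2]]; exists k => //; split.
  by [].
- exact: connected_WW.
- exact: cheeger_WW.
- by move=> x y _ _; rewrite /WW indicE; case: (_ \in _); [right|left].
- exists (UU R); split; first exact: open_UU.
  split; first by move=> z [_ h].
  split; first exact: UU_diag.
  by move=> z [hS _]; rewrite /WW indicE mem_set.
Qed.
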